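(* Let $\mathcal{X}$ be a finite set of $n$ agents, $\Gamma$ a merit distribution with finite expected merits, and $w_1\ge\dots\ge w_n$ position weights. Then all ranking distributions that are $1$-fair with respect to $\Gamma$ have the same expected utility $U(\pi,\Gamma)$ for the principal.
   Context: A ranking of $\mathcal{X}$ is a bijection $\sigma:\{1,\dots,n\}\to\mathcal{X}$ ($\sigma(k)$ is the agent in position $k$); a ranking distribution $\pi$ is a probability distribution over rankings, with marginals $P_\pi(x,k)=\sum_{\sigma:\sigma(k)=x}\pi(\sigma)$. A merit distribution $\Gamma$ is a probability distribution over $v\in\mathbb{R}^{\mathcal{X}}$ with pairwise distinct entries on its support. $\mathrm{Top}_k(x;v)$ is the event $|\{x': v_{x'}>v_x\}|<k$. For $\rho\in[0,1]$, $\pi$ is $\rho$-fair if $\sum_{k'=1}^{k}P_\pi(x,k')\ge\rho\cdot\Pr_{v\sim\Gamma}[\mathrm{Top}_k(x;v)]$ for all $x,k$. Utility: $U(\sigma,v)=\sum_{k=1}^n w_k v_{\sigma(k)}$, $U(\pi,\Gamma)=\mathbb{E}_{\sigma\sim\pi,v\sim\Gamma}[U(\sigma,v)]$ with $\sigma,v$ independent. *)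

(* Defs.v *)
From HB Require Import structures.
From mathcomp Require Import all_boot all_order all_algebra.
From mathcomp Require Import all_classical all_reals all_analysis.
Set Implicit Arguments. Unset Strict Implicit. Unset Printing Implicit Defensive.
Import Order.TTheory GRing.Theory Num.Theory.
Local Open Scope ring_scope.

(* A ranking of the finite agent set X (with n = #|X|): a bijection from
   positions {0,...,n-1} (position k of the paper = index k-1) to X.
   Since #|'I_n| = #|X|, injectivity is equivalent to bijectivity. *)
Definition ranking (X : finType) := {s : {ffun 'I_#|X| -> X} | injectiveb s}.

Definition ranking_distr (R : realType) (X : finType) (pi : ranking X -> R) :=
  (forall s, 0 <= pi s) /\ \sum_(s : ranking X) pi s = 1.

Definition marg (R : realType) (X : finType) (pi : ranking X -> R)
  (x : X) (k : 'I_#|X|) : R :=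
  \sum_(s : ranking X | val s k == x) pi s.

(* Top_k(x; v) with k = (index i).+1 : fewer than k agents have strictly
   larger merit than x. *)
Definition Top (R : realType) (X : finType) (k : nat) (x : X) (v : X -> R) : bool :=
  (#|[set x' | (v x < v x')%R]| < k)%N.

(* rho-fairness of pi w.r.t. the merit distribution, given as the law of a
   random merit vector v : T -> (X -> R) under the probability P. *)
Definition rho_fair (R : realType) (d : measure_display) (T : measurableType d)
  (P : probability T R) (X : finType) (v : T -> X -> R)
  (rho : R) (pi : ranking X -> R) : Prop :=
  forall (x : X) (k : 'I_#|X|),
    (rho%:E * P [set t | Top k.+1 x (v t)]%classic <=
       (\sum_(k' : 'I_#|X| | (k' <= k)%N) marg pi x k')%:E)%E.

(* Expected utility U(pi,Gamma) = E_{sigma ~ pi, v ~ Gamma}[sum_k w_k v_{sigma(k)}],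
   sigma and v independent (pi is discrete, so the product expectation is
   the pi-weighted sum of the Gamma-expectations). *)
Definition utility (R : realType) (d : measure_display) (T : measurableType d)
  (P : probability T R) (X : finType) (v : T -> X -> R)
  (w : 'I_#|X| -> R) (pi : ranking X -> R) : \bar R :=
  (\sum_(s : ranking X)
     (pi s)%:E * \int[P]_t (\sum_(k : 'I_#|X|) w k * v t (val s k))%:E)%E.

(* Main.v *)
Require Import Defs.
From HB Require Import structures.
From mathcomp Require Import all_boot all_order all_algebra.
From mathcomp Require Import all_classical all_reals all_analysis.
From mathcomp Require Import zify ring lra.
From mathcomp Require Import measurable_realfun.
Import Order.TTheory GRing.Theory Num.Theory.
Set Implicit Arguments. Unset Strict Implicit.
Local Open Scope ring_scope.

Lemma top_count (R : realType) (X : finType) (f : X -> R) (k : nat) :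
  (k < #|X|)%N -> (k.+1 <= #|[set x | Top k.+1 x f]|)%N.
Proof.
move=> kn; rewrite leqNgt; apply/negP => HS.
set S := [set x | Top k.+1 x f] in HS.
have : (0 < #|~: S|)%N by move: (cardsC S); lia.
case/card_gt0P => y0 Hy0.
have Hy0' : y0 \notin S by move: Hy0; rewrite inE.
case: (@arg_maxP _ _ _ y0 (fun x => x \notin S) f Hy0') => y Hy Hmax.
have sub : [set x' | f y < f x'] \subset S.
  apply/fintype.subsetP => x'; rewrite inE => lt.
  apply/negPn/negP => nS.
  have := Hmax x' nS. by rewrite /= leNgt lt.
have : y \in S.
  rewrite inE /Top.
  by apply: (leq_ltn_trans (subset_leq_card sub)); rewrite ltnS -ltnS.
by move: Hy => /negP.
Qed.

Lemma sumF (R : realType) (X : finType) (pi : ranking X -> R) (k : 'I_#|X|) :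
  ranking_distr pi ->
  \sum_(x : X) \sum_(k' : 'I_#|X| | (k' <= k)%N) marg pi x k' = (k.+1)%:R.
Proof.
case=> _ H1; rewrite exchange_big /=.
have E : forall k' : 'I_#|X|, \sum_(x : X) marg pi x k' = 1.
  move=> k'; rewrite -H1 (partition_big (fun s : ranking X => val s k') xpredT) //.
transitivity (\sum_(k' < #|X| | (k' < k.+1)%N) (1 : R)).
  by apply: eq_bigr => k' _; rewrite E.
rewrite -(big_ord_widen_cond _ (fun _ => true) (fun _ => (1:R)) (ltn_ord k)) /=.
by rewrite sumr_const card_ord.
Qed.
Local Open Scope classical_set_scope.

Lemma meas_top (R : realType) (d : measure_display) (T : measurableType d)
  (X : finType) (v : T -> X -> R)
  (v_meas : forall x : X, measurable_fun setT (fun t => v t x))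
  (k : nat) (x : X) : measurable [set t | Top k x (v t)].
Proof.
have -> : [set t | Top k x (v t)] =
  \bigcup_(S in [set S : {set X} | (#|S| < k)%N])
    \bigcap_(x' in [set: X]) [set t | (v t x < v t x') = (x' \in S)].
  apply/seteqP; split => t /=.
    move=> Ht; exists [set x' | v t x < v t x']%SET => //= x' _.
    by rewrite inE.
  case=> S /= HS HI; rewrite /Top.
  suff -> : [set x' | v t x < v t x']%SET = S by [].
  by apply/setP => x'; rewrite inE (HI x' I).
apply: fin_bigcup_measurable; first exact: finite_finset.
move=> S _; apply: fin_bigcap_measurable; first exact: finite_finset.
move=> x' _.
have mb : measurable [set (x' \in S)] by done.
have := measurable_realfun.measurable_fun_ltr (v_meas x) (v_meas x') measurableT mb.
by rewrite setTI.
Qed.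

Lemma sumP_ge (R : realType) (d : measure_display) (T : measurableType d)
  (P : probability T R) (X : finType) (v : T -> X -> R)
  (v_meas : forall x : X, measurable_fun setT (fun t => v t x))
  (k : 'I_#|X|) :
  (((k.+1)%:R)%:E <= \sum_(x : X) P [set t | Top k.+1 x (v t)])%E.
Proof.
have mA := meas_top v_meas k.+1.
have E : forall x, P [set t | Top k.+1 x (v t)] =
   (\int[P]_t (\1_[set t | Top k.+1 x (v t)] t)%:E)%E.
  by move=> x; rewrite integral_indic ?setIT.
under eq_bigr do rewrite E.
rewrite -ge0_integral_sum //; first last.
  by move=> x; apply/measurable_EFinP; exact: measurable_indic.
have -> : (((k.+1)%:R)%:E = \int[P]_t (cst ((k.+1)%:R)%:E) t)%E.
  rewrite integral_cst // -[LHS]mule1; congr (_ * _)%E; symmetry; exact: probability_setT.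
apply: ge0_le_integral => //.
- by move=> t _; rewrite lee_fin.
- by apply: emeasurable_sum => x; apply/measurable_EFinP; exact: measurable_indic.
move=> t _; rewrite sumEFin lee_fin.
rewrite (bigID (fun x => Top k.+1 x (v t))) /=.
rewrite [X in _ + X]big1; last first.
  by move=> x Hx; rewrite indicE memNset //=; apply/negP.
rewrite addr0 (eq_bigr (fun _ => 1)); last first.
  by move=> x Hx; rewrite indicE mem_set.
rewrite sumr_const ler_nat.
have := top_count (v t) (ltn_ord k).
by rewrite cardsE.
Qed.

Lemma F_eq (R : realType) (d : measure_display) (T : measurableType d)
  (P : probability T R) (X : finType) (v : T -> X -> R)
  (v_meas : forall x : X, measurable_fun setT (fun t => v t x))
  (pi : ranking X -> R) :
  ranking_distr pi -> rho_fair P v 1 pi ->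
  forall (x : X) (k : 'I_#|X|),
  \sum_(k' : 'I_#|X| | (k' <= k)%N) marg pi x k' =
    fine (P [set t | Top k.+1 x (v t)]).
Proof.
move=> Hd Hf x k.
have mA := meas_top v_meas k.+1.
set p := fun x => fine (P [set t | Top k.+1 x (v t)]).
set F := fun x => \sum_(k' : 'I_#|X| | (k' <= k)%N) marg pi x k'.
have Pp : forall x, P [set t | Top k.+1 x (v t)] = (p x)%:E.
  by move=> y; rewrite /p fineK //; exact: fin_num_measure.
have le : forall x, p x <= F x.
  by move=> y; have := Hf y k; rewrite mul1e Pp lee_fin.
have ge : (k.+1)%:R <= \sum_x p x.
  by have := sumP_ge P v_meas k; under eq_bigr do rewrite Pp; rewrite sumEFin lee_fin.
have sF : \sum_x F x = (k.+1)%:R by exact: sumF.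
have s0 : \sum_x (F x - p x) = 0.
  apply/eqP; rewrite eq_le; apply/andP; split.
    by rewrite sumrB sF subr_le0.
  by apply: sumr_ge0 => y _; rewrite subr_ge0.
have H0 := @psumr_eq0P _ _ xpredT (fun y => F y - p y)
  (fun y _ => ltac:(by rewrite subr_ge0)) s0 x isT.
by apply/eqP; rewrite -subr_eq0; apply/eqP; exact: H0.
Qed.

Lemma marg_eq (R : realType) (X : finType) (pi1 pi2 : ranking X -> R) :
  (forall x (k : 'I_#|X|), \sum_(k' : 'I_#|X| | (k' <= k)%N) marg pi1 x k' =
                         \sum_(k' : 'I_#|X| | (k' <= k)%N) marg pi2 x k') ->
  forall x k, marg pi1 x k = marg pi2 x k.
Proof.
move=> H x.
suff : forall m (k : 'I_#|X|), (k < m)%N -> marg pi1 x k = marg pi2 x k.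
  by move=> Hm k; apply: (Hm k.+1).
elim=> [//|m IH] k Hk.
have := H x k.
rewrite (bigD1 k) //= [in X in _ = X](bigD1 k) //=.
have -> : \sum_(k' : 'I_#|X| | (k' <= k)%N && (k' != k)) marg pi1 x k' =
          \sum_(k' : 'I_#|X| | (k' <= k)%N && (k' != k)) marg pi2 x k'.
  apply: eq_bigr => k' /andP[H1 H2]; apply: IH.
  have : (k' < k)%N by rewrite ltn_neqAle H1 andbT.
  lia.
by move/addIr.
Qed.

Lemma utilityE (R : realType) (d : measure_display) (T : measurableType d)
  (P : probability T R) (X : finType) (v : T -> X -> R)
  (v_int : forall x : X, P.-integrable setT (fun t => (v t x)%:E))
  (w : 'I_#|X| -> R) (pi : ranking X -> R) :
  utility P v w pi =
  (\sum_(k : 'I_#|X|) w k * \sum_(x : X) marg pi x k *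
      fine (\int[P]_t (v t x)%:E)%E)%:E.
Proof.
set c := fun x => fine (\int[P]_t (v t x)%:E)%E.
have I : forall s : ranking X,
  (\int[P]_t (\sum_(k : 'I_#|X|) w k * v t (val s k))%:E = 
   (\sum_(k : 'I_#|X|) w k * c (val s k))%:E)%E.
  move=> s; under eq_integral => t _ do rewrite -sumEFin.
  rewrite integral_sum //; last first.
    move=> k; under eq_fun do rewrite EFinM; exact: integrableZl.
  rewrite -sumEFin; apply: eq_bigr => k _.
  under eq_integral => t _ do rewrite EFinM.
  rewrite integralZl // EFinM /c fineK //; exact: integrable_fin_num.
rewrite /utility; under eq_bigr do rewrite I -EFinM.
rewrite sumEFin; congr (_%:E).
under eq_bigr do rewrite big_distrr /=.
rewrite exchange_big /=; apply: eq_bigr => k _.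
transitivity (w k * \sum_(s : ranking X) pi s * c (sval s k)).
  by rewrite big_distrr; apply: eq_bigr => s _; rewrite mulrCA.
congr (_ * _).
rewrite (partition_big (fun s : ranking X => sval s k) xpredT) //=.
apply: eq_bigr => x _; rewrite /marg big_distrl /=.
by apply: eq_big => [s|s /= /eqP <-].
Qed.

Unset Implicit Arguments. Set Strict Implicit.
Theorem lemma2 (R : realType) (d : measure_display) (T : measurableType d)
  (P : probability T R) (X : finType) (v : T -> X -> R)
  (v_meas : forall x : X, measurable_fun setT (fun t => v t x))
  (v_int : forall x : X, P.-integrable setT (fun t => (v t x)%:E))
  (v_distinct : {ae P, forall t, injective (v t)})
  (w : 'I_#|X| -> R)
  (w_noninc : forall i j : 'I_#|X|, (i <= j)%N -> w j <= w i)
  (pi1 pi2 : ranking X -> R) :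
  ranking_distr pi1 -> ranking_distr pi2 ->
  rho_fair P v 1 pi1 -> rho_fair P v 1 pi2 ->
  utility P v w pi1 = utility P v w pi2.
Proof.
move=> d1 d2 f1 f2.
have M : forall x k, marg pi1 x k = marg pi2 x k.
  apply: marg_eq => x k.
  by rewrite (F_eq v_meas d1 f1) (F_eq v_meas d2 f2).
rewrite !utilityE //; congr (_%:E); apply: eq_bigr => k _; congr (_ * _).
by apply: eq_bigr => x _; rewrite M.
Qed.
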